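(* Let $\boldsymbol{Y}_t$ be an $n\times 1$ vector of observed variables generated by the structural vector moving average model $$\boldsymbol{Y}_t=\sum_{j=0}^{\infty}\boldsymbol{\Theta}_j\boldsymbol{\varepsilon}_{t-j},$$ where $\boldsymbol{\varepsilon}_t=(\varepsilon_{1,t},\dots,\varepsilon_{m,t})'$ is an $m\times1$ vector of unobserved structural shocks with $E[\boldsymbol{\varepsilon}_t]=0$, $E[\boldsymbol{\varepsilon}_t\boldsymbol{\varepsilon}_t']>0$ and mutually uncorrelated components, and each $\boldsymbol{\Theta}_h$ is an $n\times m$ matrix. Let $x_t$ be the first element and $y_t$ the last element of $\boldsymbol{Y}_t$, let $\theta_{h,xs}$ and $\theta_{h,ys}$ denote the $(1,s)$-th and $(n,s)$-th elements of $\boldsymbol{\Theta}_h$. Fix $1\le S\le m$ and let $\xi_t=\sum_{s=1}^S\varepsilon_{s,t}$. Let $z_t$ be a random variable satisfying: (i) $E[z_t\xi_t]\neq0$; (ii) $E[z_t\varepsilon_{s,t}]=0$ for all $s=S+1,\dots,m$; (iii) $E[z_t\boldsymbol{\varepsilon}_{t+j}]=0$ for all $j\ne0$. Write $\alpha_s=E[z_t\varepsilon_{s,t}]$. For $h\ge0$ define $\widetilde{y}_{t+h}=\sum_{j=0}^h y_{t+j}$, $\widetilde{x}_{t+h}=\sum_{j=0}^h x_{t+j}$, $\widetilde{\theta}_{h,ys}=\sum_{j=0}^h\theta_{j,ys}$ and $\widetilde{\theta}_{h,xs}=\sum_{j=0}^h\theta_{j,xs}$. Suppose $\widetilde{\theta}_{h,xs}\neq0$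 for all $s=1,\dots,S$. Then for every $h=0,1,2,\dots$ such that $Cov(\widetilde{x}_{t+h},z_t)\neq 0$, $$\widetilde{\beta}_h\equiv\frac{Cov(\widetilde{y}_{t+h},z_t)}{Cov(\widetilde{x}_{t+h},z_t)}=\sum_{s=1}^S\left(\frac{\alpha_s\widetilde{\theta}_{h,xs}}{\sum_{s'=1}^S\alpha_{s'}\widetilde{\theta}_{h,xs'}}\right)\frac{\widetilde{\theta}_{h,ys}}{\widetilde{\theta}_{h,xs}}.$$
   Context: All moments involved are assumed finite and the moving average series is assumed to converge so that covariances can be computed term by term. *)

(* Defs.v *)
From HB Require Import structures.
From mathcomp Require Import all_boot all_order all_algebra.
From mathcomp Require Import all_classical all_reals all_analysis.
Set Implicit Arguments. Unset Strict Implicit. Unset Printing Implicit Defensive.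
Import Order.TTheory GRing.Theory Num.Theory.
Local Open Scope ring_scope.

Definition cumtheta (R : realType) (n m : nat) (Theta : nat -> 'M[R]_(n, m))
  (h : nat) (i : 'I_n) (s : 'I_m) : R :=
  \sum_(j < h.+1) Theta j i s.

Definition cumvar (T : Type) (R : realType) (w : int -> T -> R) (t : int) (h : nat)
  : T -> R := fun omega => \sum_(j < h.+1) w (t + (j : nat)%:Z) omega.

Definition shock_cov d (T : measurableType d) (R : realType) (P : probability T R)
  (m : nat) (eps : 'I_m -> int -> T -> R) (u : int) : 'M[R]_m :=
  \matrix_(i, j) fine ('E_P[fun omega => (eps i u omega * eps j u omega)%R])%E.

Definition posdef (R : realType) (m : nat) (A : 'M[R]_m) : Prop :=
  forall v : 'cV[R]_m, v != 0 -> 0 < (v^T *m A *m v) ord0 ord0.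

(* Main.v *)
Require Import Defs.
From HB Require Import structures.
From mathcomp Require Import all_boot all_order all_algebra.
From mathcomp Require Import all_classical all_reals all_analysis.
From mathcomp Require Import zify ring.
Import Order.TTheory GRing.Theory Num.Theory.
Import numFieldTopology.Exports numFieldNormedType.Exports.
Local Open Scope classical_set_scope.
Local Open Scope ring_scope.

Section helpers.
Context (d : measure_display) (T : measurableType d) (R : realType) (P : probability T R).

Lemma cov_sum k (X : 'I_k -> T -> R) (Z : T -> R) :
  (forall j, X j \in Lfun P 2%:E) -> Z \in Lfun P 2%:E ->
  covariance P (fun w => \sum_(j < k) X j w) Z = (\sum_(j < k) covariance P (X j) Z)%E.
Proof.
elim: k X => [|k IH] X HX HZ.
  rewrite big_ord0 (_ : (fun w => _) = cst 0); last by apply/funext => w; rewrite big_ord0.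
  exact: covariance_cst_l.
rewrite big_ord_recr /= -IH //.
rewrite (_ : (fun w => _) = (fun w => \sum_(j < k) X (widen_ord (leqnSn k) j) w) \+ X ord_max)%R;
  last by apply/funext => w; rewrite big_ord_recr.
rewrite covarianceDl //.
rewrite (_ : (fun w => _) = \sum_(j < k) X (widen_ord (leqnSn k) j)); last by rewrite fct_sumE.
have H12 : (1 <= 2%:E :> \bar R)%E by rewrite lee1n.
by apply: rpred_sum => j _.
Qed.

Lemma cov_eps (X Z : T -> R) : X \in Lfun P 2%:E -> Z \in Lfun P 2%:E ->
  ('E_P[X] = 0)%E ->
  covariance P X Z = ('E_P[fun w => (Z w * X w)%R])%E.
Proof.
move=> HX HZ E0.
have Pfin : P setT \is a fin_num := fin_num_measure P _ measurableT.
rewrite covarianceE; first last.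
- exact: Lfun2_mul_Lfun1.
- exact: Lfun_subset12.
- exact: Lfun_subset12.
rewrite E0 mul0e sube0; congr expectation; apply/funext => w /=; exact: mulrC.
Qed.

End helpers.
Theorem corollary1 (d : measure_display) (T : measurableType d) (R : realType)
  (P : probability T R) (n m S : nat)
  (Theta : nat -> 'M[R]_(n.+1, m))
  (eps : 'I_m -> int -> T -> R)
  (Y : 'I_n.+1 -> int -> T -> R)
  (z : T -> R) (t : int) :
  (1 <= S <= m)%N ->
  (* finite second moments *)
  (forall s u, eps s u \in Lfun P 2%:E) ->
  (forall i u, Y i u \in Lfun P 2%:E) ->
  z \in Lfun P 2%:E ->
  (* structural shocks: mean zero, positive definite E[eps eps'], uncorrelated *)
  (forall s u, ('E_P[eps s u] = 0)%E) ->
  (forall u, posdef (shock_cov P eps u)) ->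
  (forall u (s s' : 'I_m), s != s' ->
     ('E_P[fun w => (eps s u w * eps s' u w)%R] = 0)%E) ->
  (* SVMA model Y_u = sum_j Theta_j eps_{u-j} (series converging a.s.) *)
  (forall i u, {ae P, forall w,
     (fun N => \sum_(j < N) \sum_(s < m) Theta j i s * eps s (u - (j : nat)%:Z) w)
       @ \oo --> Y i u w}) ->
  (* standing assumption: covariances with z computed term by term *)
  (forall i u,
     (fun N => \sum_(j < N) \sum_(s < m)
         Theta j i s * fine (covariance P (eps s (u - (j : nat)%:Z)) z))
       @ \oo --> fine (covariance P (Y i u) z)) ->
  (* instrument conditions *)
  (* (i) *) ('E_P[fun w => (z w * \sum_(s < m | (s < S)%N) eps s t w)%R] != 0)%E ->
  (* (ii) *) (forall s : 'I_m, (S <= s)%N -> ('E_P[fun w => (z w * eps s t w)%R] = 0)%E) ->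
  (* (iii) *) (forall (j : int) (s : 'I_m), j != 0 ->
                 ('E_P[fun w => (z w * eps s (t + j) w)%R] = 0)%E) ->
  forall h : nat,
    (forall s : 'I_m, (s < S)%N -> cumtheta Theta h ord0 s != 0) ->
    covariance P (cumvar (Y ord0) t h) z != 0%E ->
    let alpha := fun s : 'I_m => fine ('E_P[fun w => (z w * eps s t w)%R])%E in
    fine (covariance P (cumvar (Y ord_max) t h) z)
      / fine (covariance P (cumvar (Y ord0) t h) z)
    = \sum_(s < m | (s < S)%N)
        (alpha s * cumtheta Theta h ord0 s
           / \sum_(s' < m | (s' < S)%N) alpha s' * cumtheta Theta h ord0 s')
        * (cumtheta Theta h ord_max s / cumtheta Theta h ord0 s).
Proof.
move=> HS Heps2 HY2 Hz2 Eeps0 _ _ _ Hcov Hi Hii Hiii h Hth _ alpha.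
have cE : forall s v, fine (covariance P (eps s v) z) =
    fine ('E_P[fun w => (z w * eps s v w)%R])%E.
  by move=> s v; rewrite cov_eps.
have c0 : forall s v, v != t -> fine (covariance P (eps s v) z) = 0.
  move=> s v hv; rewrite cE -[v](addrNK t) addrC Hiii //.
  by rewrite subr_eq0.
have ct : forall s, fine (covariance P (eps s t) z) = alpha s by move=> s; rewrite cE.
have key : forall i (j : nat), fine (covariance P (Y i (t + j%:Z)) z) =
    \sum_(s < m) Theta j i s * alpha s.
  move=> i j.
  apply: norm_cvg_unique (Hcov i (t + j%:Z)) _.
  apply: cvg_near_cst.
  exists j.+1 => // N /= hN.
  rewrite (eq_bigr (fun j' : 'I_N => if (j' == j :> nat) then
     \sum_(s < m) Theta j i s * alpha s else 0)); last first.
    move=> j' _; case: eqP => [->|hne].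
      by apply: eq_bigr => s _; rewrite addrK ct.
    apply: big1 => s _; rewrite c0 ?mulr0 //.
    by apply/eqP => E; apply: hne; lia.
  rewrite -big_mkcond /=.
  by rewrite (big_ord1_eq _ (fun _ : nat => \sum_(s < m) Theta j i s * alpha s) j N) hN.
have covsum : forall i, fine (covariance P (cumvar (Y i) t h) z) =
    \sum_(s < m | (s < S)%N) alpha s * cumtheta Theta h i s.
  move=> i; rewrite /cumvar cov_sum // -sum_fine; last first.
    move=> j _; apply: covariance_fin_num.
    - exact: (Lfun_subset12 (fin_num_measure P _ measurableT)).
    - exact: (Lfun_subset12 (fin_num_measure P _ measurableT)).
    - exact: Lfun2_mul_Lfun1.
  rewrite (eq_bigr _ (fun (j : 'I_h.+1) _ => key i j)) exchange_big /=.
  rewrite [RHS]big_mkcond /=; apply: eq_bigr => s _.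
  case: ifP => hs.
    by rewrite /cumtheta mulr_sumr; apply: eq_bigr => j _; rewrite mulrC.
  rewrite big1 // => j _.
  by rewrite /alpha Hii ?mulr0 // leqNgt hs.
rewrite !covsum mulr_suml; apply: eq_bigr => s hs.
have hne := Hth s hs.
move: hne (alpha s) (cumtheta Theta h ord_max s) (\sum_(s0 < m | (s0 < S)%N) alpha s0 * cumtheta Theta h ord0 s0).
move: (cumtheta Theta h ord0 s) => c00 hc0 a cn D.
rewrite mulf_div (mulrAC a c00 cn) [D * c00]mulrC.
by rewrite invfM mulrA mulfK.
Qed.
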